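(* Let $A[0..m-1]$ and $B[0..n-1]$ be arrays sorted with respect to a total preorder $\leq$ on keys, and let $p\geq 1$ processing elements with shared access to $A$, $B$ and an output array $C[0..m+n-1]$ execute the parallel merge algorithm described in the context. Then afterwards $C=\mathsf{stable\_merge}(A,B,\leq)$ (the merge is stable), the number of elements merged by each processing element is at most $\lceil (m+n)/p\rceil$, and the total time complexity is $\mathcal{O}\!\left(\frac{n+m}{p}+\log\min(m,n)\right)$.
   Context: $\mathsf{stable\_merge}(X,Y,\leq)$ is the sorted merge of $X$ and $Y$ preserving the relative order within each array and placing elements of $X$ before equal-keyed elements of $Y$; a sequential stable merge of arrays of lengths $a,b$ running in $\mathcal{O}(a+b)$ time is assumed available. For $0\le i\le m+n$, the co-ranks of $i$ are the unique $(j,k)$ with $0\le j\le m$, $0\le k\le n$, $j+k=i$, ($j=0$ or $A[j-1]\leq B[k]$) and ($k=0$ or $B[k-1]<A[j]$) (with sentinels $A[m]=B[n]=+\infty$); they are computed by the procedure $\mathsf{co\_rank}$: set $j\gets\min(i,m)$, $k\gets i-j$, $j_{\rm low}\gets\max(0,i-n)$; repeat: if $j>0$, $k<n$ and $A[j-1]>B[k]$ then $\delta\gets\lceil (j-j_{\rm low})/2\rceil$, $k_{\rm low}\gets k$, $j\gets j-\delta$, $k\gets k+\delta$; else if $k>0$, $j<m$ and $B[k-1]\geq A[j]$ then $\delta\gets\lceil (k-k_{\rm low})/2\rceil$, $j_{\rm low}\gets j$, $j\gets j+\delta$, $k\gets k-\delta$; else stop and return $(j,k)$. Parallel merge algorithm: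 processing element $r$, $0\le r<p$, independently computes $i_r=\lfloor r(m+n)/p\rfloor$ and $i_{r+1}=\lfloor (r+1)(m+n)/p\rfloor$, computes $(j_r,k_r)=\mathsf{co\_rank}(i_r,A,m,B,n,\leq)$ and $(j_{r+1},k_{r+1})=\mathsf{co\_rank}(i_{r+1},A,m,B,n,\leq)$, and then sequentially stably merges $A[j_r,\ldots,j_{r+1}-1]$ and $B[k_r,\ldots,k_{r+1}-1]$ into $C[i_r,\ldots,i_{r+1}-1]$. *)

(* Defs.v *)
From mathcomp Require Import all_boot.
Set Implicit Arguments.
Unset Strict Implicit.
Unset Printing Implicit Defensive.

(* Arrays are sequences [seq T]; indices are 0-based.
   Keys are compared by a relation [le : rel T] (assumed in the theorem to be
   a total preorder).  [x0] is an arbitrary default element used for [nth]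
   (only ever read at in-range indices). *)

(* The stable merge of X and Y: MathComp's [path.merge], which takes the head
   of X whenever it is <= the head of Y, i.e. X-elements go before
   equal-keyed Y-elements. *)
Definition stable_merge (T : Type) (le : rel T) (X Y : seq T) : seq T :=
  merge le X Y.

Definition slice (T : Type) (X : seq T) (a b : nat) : seq T :=
  take (b - a) (drop a X).

Fixpoint co_rank_loop (T : Type) (le : rel T) (x0 : T) (A B : seq T)
    (fuel j k jlow klow steps : nat) {struct fuel} : nat * nat * nat :=
  match fuel with
  | 0 => (j, k, steps)
  | fuel'.+1 =>
    let m := size A in let n := size B in
    if [&& 0 < j, k < n & ~~ le (nth x0 A j.-1) (nth x0 B k)] then
      let delta := (j - jlow).+1 %/ 2 in
      co_rank_loop le x0 A B fuel' (j - delta) (k + delta) jlow k steps.+1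
    else if [&& 0 < k, j < m & le (nth x0 A j) (nth x0 B k.-1)] then
      let delta := (k - klow).+1 %/ 2 in
      co_rank_loop le x0 A B fuel' (j + delta) (k - delta) j klow steps.+1
    else (j, k, steps.+1)
  end.

(* co_rank(i, A, m, B, n, <=): j = min(i,m), k = i - j,
   j_low = max(0, i-n), k_low = max(0, i-m).  Fuel m+n+1 is a generous bound
   (the loop provably stops far earlier). *)
Definition co_rank_run (T : Type) (le : rel T) (x0 : T) (A B : seq T)
    (i : nat) : nat * nat * nat :=
  let m := size A in let n := size B in
  co_rank_loop le x0 A B (m + n).+1 (minn i m) (i - minn i m) (i - n) (i - m) 0.

Definition co_rank (T : Type) (le : rel T) (x0 : T) (A B : seq T) (i : nat)
  : nat * nat := (co_rank_run le x0 A B i).1.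
Definition co_rank_steps (T : Type) (le : rel T) (x0 : T) (A B : seq T)
    (i : nat) : nat := (co_rank_run le x0 A B i).2.

Definition split_index (m n p r : nat) : nat := (r * (m + n)) %/ p.

Section PE.
Variables (T : Type) (le : rel T) (x0 : T) (A B : seq T) (p : nat).

Definition ir (r : nat) : nat := split_index (size A) (size B) p r.
Definition jr (r : nat) : nat := (co_rank le x0 A B (ir r)).1.
Definition kr (r : nat) : nat := (co_rank le x0 A B (ir r)).2.

Definition pe_output (r : nat) : seq T :=
  stable_merge le (slice A (jr r) (jr r.+1)) (slice B (kr r) (kr r.+1)).

Definition pe_count (r : nat) : nat :=
  (jr r.+1 - jr r) + (kr r.+1 - kr r).

(* Time of processing element r (unit-cost model): O(1) for computing the
   split indices, one unit per co_rank loop iteration, and a + b for the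
   sequential merge of lengths a, b. *)
Definition pe_time (r : nat) : nat :=
  1 + co_rank_steps le x0 A B (ir r) + co_rank_steps le x0 A B (ir r.+1)
    + pe_count r.

Definition par_time : nat := \max_(r < p) pe_time r.
End PE.

Definition write_block (T : Type) (x0 : T) (C : seq T) (i : nat) (s : seq T)
  : seq T :=
  [seq if (i <= q) && (q < i + size s) then nth x0 s (q - i) else nth x0 C q
  | q <- iota 0 (size C)].

(* Final content of the shared output array C, initially C0, after every
   processing element r < p has written its output to C[i_r ..]. *)
Definition parallel_merge_result (T : Type) (le : rel T) (x0 : T)
    (A B : seq T) (p : nat) (C0 : seq T) : seq T :=
  foldl (fun C r => write_block x0 C (ir A B p r) (pe_output le x0 A B p r))
    C0 (iota 0 p).

(* Main.v *)
Require Import Defs.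
From mathcomp Require Import all_boot zify.
Set Implicit Arguments.
Unset Strict Implicit.
Unset Printing Implicit Defensive.

Section Merge.
Variables (T : Type) (le : rel T) (x0 : T).
Hypotheses (tot : total le) (tr : transitive le).

Lemma le_refl : reflexive le.
Proof. by move=> x; case/orP: (tot x x). Qed.

Definition valid (A B : seq T) j k :=
 [&& j <= size A, k <= size B,
   [|| j == 0, k == size B | le (nth x0 A j.-1) (nth x0 B k)] &
   [|| k == 0, j == size A | ~~ le (nth x0 A j) (nth x0 B k.-1)]].

Lemma srt_nth (s : seq T) a b : sorted le s -> a <= b -> b < size s ->
  le (nth x0 s a) (nth x0 s b).
Proof.
move=> ss ab bs; apply: (sorted_leq_nth tr le_refl) => //; rewrite inE //.
exact: leq_ltn_trans ab bs.
Qed.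

Lemma merge_cons_l x s t : (t = [::] \/ le x (head x t)) ->
  merge le (x :: s) t = x :: merge le s t.
Proof.
case: t => [|y t] /=; first by case: s.
by case=> // ->.
Qed.

Lemma merge_cons_r y s t : (s = [::] \/ ~~ le (head y s) y) ->
  merge le s (y :: t) = y :: merge le s t.
Proof.
case: s => [|x s] //= [] // /negbTE ->. by [].
Qed.

Lemma merges0 s : merge le s [::] = s.
Proof. by case: s. Qed.

Lemma merge_split (A B : seq T) j k : sorted le A -> sorted le B ->
  valid A B j k ->
  merge le A B = merge le (take j A) (take k B) ++ merge le (drop j A) (drop k B).
Proof.
elim: A B j k => [|x A' IHA] B j k sA sB.
  case/and4P; rewrite leqn0 => /eqP -> _ _ _ /=.
  by rewrite cat_take_drop.
elim: B j k sB => [|y B' IHB] j k sB.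
  case/and4P => _; rewrite leqn0 => /eqP -> _ _.
  by rewrite !merges0 cat_take_drop.
move=> v.
have v' := v; case/and4P: v' => jA kB c1 c2.
have [j0|jk] := boolP ((j == 0) && (k == 0)).
  by case/andP: j0 => /eqP -> /eqP ->; rewrite take0 drop0 take0 drop0.
have sA' : sorted le A' by move: sA => /= /path_sorted.
have sB' : sorted le B' by move: sB => /= /path_sorted.
case: (boolP (le x y)) => lxy.
  rewrite (@merge_cons_l x A' (y :: B')); last by right.
- case: j jk jA c1 c2 {v} => [|j'] jk jA c1 c2.
    move: c2; rewrite /=; move: jk; rewrite /= => /negbTE kn0.
    rewrite kn0 /=; case/negP.
    apply: tr lxy _.
    have := srt_nth sB (leq0n k.-1); rewrite /= => -> //.
    by rewrite prednK // lt0n kn0.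
  rewrite /= merge_cons_l; last first.
    by case: (k) => [|k'] /=; [left | right].
  rewrite cat_cons; congr (_ :: _); apply: IHA => //.
  rewrite /valid /= -ltnS jA kB /=.
  apply/andP; split.
    by case: j' {jA c2 jk} c1 => [|j''] //=.
  by rewrite /= eqSS in c2.
- have lxy' := lxy.
  rewrite (@merge_cons_r y (x :: A') B'); last by right.
  case: k jk kB c1 c2 {v} => [|k'] jk kB c1 c2.
    move: jk; rewrite andbT => /negbTE jn0.
    move: c1; rewrite jn0 /= => c1; case/negP: lxy'.
    apply: tr c1.
    have := srt_nth sA (leq0n j.-1); rewrite /= => -> //.
    by rewrite prednK // lt0n jn0.
  rewrite /= merge_cons_r; last first.
    by case: (j) => [|j'] /=; [left | right].
  rewrite cat_cons; congr (_ :: _); apply: IHB => //.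
  rewrite /valid /= jA -ltnS kB /=.
  apply/andP; split; first by rewrite eqSS in c1.
  by case: k' {kB c1 jk} c2 => [|k''] //=.
Qed.

Lemma valid_mono (A B : seq T) j1 k1 j2 k2 : sorted le A -> sorted le B ->
  valid A B j1 k1 -> valid A B j2 k2 -> j1 + k1 <= j2 + k2 ->
  j1 <= j2 /\ k1 <= k2.
Proof.
move=> sA sB /and4P[jA1 kB1 c11 c21] /and4P[jA2 kB2 c12 c22] hs.
split; rewrite leqNgt; apply/negP => hlt.
- have hk : k1 < k2 by lia.
  have l1 : le (nth x0 A j1.-1) (nth x0 B k1).
    case/or3P: c11 => [/eqP|/eqP|//]; lia.
  case/or3P: c22 => [/eqP|/eqP|/negP]; [lia|lia|apply].
  apply: tr (srt_nth sA (_ : j2 <= j1.-1) _) _; [lia|lia|].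
  apply: tr l1 _; apply: srt_nth => //; lia.
- have hj : j1 < j2 by lia.
  have l1 : le (nth x0 A j2.-1) (nth x0 B k2).
    case/or3P: c12 => [/eqP|/eqP|//]; lia.
  case/or3P: c21 => [/eqP|/eqP|/negP]; [lia|lia|apply].
  apply: tr (srt_nth sA (_ : j1 <= j2.-1) _) _; [lia|lia|].
  apply: tr l1 _; apply: srt_nth => //; lia.
Qed.

Lemma merge_piece (A B : seq T) j1 k1 j2 k2 : sorted le A -> sorted le B ->
  valid A B j1 k1 -> valid A B j2 k2 -> j1 + k1 <= j2 + k2 ->
  merge le (slice A j1 j2) (slice B k1 k2) =
  take ((j2 + k2) - (j1 + k1)) (drop (j1 + k1) (merge le A B)).
Proof.
move=> sA sB v1 v2 hs.
have [hj hk] := valid_mono sA sB v1 v2 hs.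
have v2' := v2; case/and4P: v2' => jA2 kB2 _ _.
have v1' := v1; case/and4P: v1' => jA1 kB1 c1 c2.
have v1t : valid (take j2 A) (take k2 B) j1 k1.
  rewrite /valid !size_takel // hj hk /=.
  apply/andP; split.
    case/or3P: c1 => [->//|/eqP e|l].
      by rewrite (_ : k1 == k2) ?orbT //; apply/eqP; lia.
    have [j0|jp] := posnP j1; first by rewrite j0.
    have [ek|ltk] := eqVneq k1 k2; first by rewrite ek.
    rewrite (@nth_take j2 _ x0 j1.-1) ?(@nth_take k2 _ x0 k1) ?l ?orbT //; lia.
  case/or3P: c2 => [->//|/eqP e|l].
    by rewrite (_ : j1 == j2) ?orbT //; apply/eqP; lia.
  have [k0|kp] := posnP k1; first by rewrite k0.
  have [ej|ltj] := eqVneq j1 j2; first by rewrite ej.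
  rewrite (@nth_take j2 _ x0 j1) ?(@nth_take k2 _ x0 k1.-1) ?l ?orbT //; lia.
rewrite (merge_split sA sB v2).
rewrite (merge_split (take_sorted _ sA) (take_sorted _ sB) v1t).
rewrite take_takel // take_takel // -catA.
have sz : size (merge le (take j1 A) (take k1 B)) = j1 + k1.
  by rewrite size_merge size_cat !size_takel //; lia.
rewrite drop_size_cat // take_size_cat //.
  by rewrite /slice !take_drop !subnK.
by rewrite size_merge size_cat !size_drop !size_takel //; lia.
Qed.


Section CoRank.
Variables (A B : seq T) (i : nat).
Hypotheses (sA : sorted le A) (sB : sorted le B) (Hi : i <= size A + size B).

Let m := size A.
Let n := size B.
Let lo0 := i - n.
Let hi0 := minn i m.

Definition hh j := [&& 0 < i - j, j < size A & le (nth x0 A j) (nth x0 B (i - j).-1)].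
Definition t1 j := [&& 0 < j, i - j < size B & ~~ le (nth x0 A j.-1) (nth x0 B (i - j))].

Lemma lohi : lo0 <= hi0.
Proof. rewrite /lo0 /hi0 /m /n; lia. Qed.

Lemma hh_down j : lo0 <= j -> j < hi0 -> hh j.+1 -> hh j.
Proof.
rewrite /lo0 /hi0 /m /n /hh => l1 l2 /and3P[p1 p2 p3].
apply/and3P; split; [lia|lia|].
apply: tr (srt_nth sA (leqnSn j) p2) _.
apply: tr p3 _; apply: srt_nth => //; lia.
Qed.

Lemma t1_S j : lo0 <= j -> j < hi0 -> t1 j.+1 = ~~ hh j.
Proof.
rewrite /lo0 /hi0 /m /n /hh /t1 => l1 l2.
have -> : (i - j).-1 = i - j.+1 by lia.
have -> : 0 < i - j by lia.
have -> : j < size A by lia.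
have -> : i - j.+1 < size B by lia.
by [].
Qed.

Lemma t1_lo : t1 lo0 = false.
Proof.
rewrite /t1 /lo0 /n; case: (posnP (i - size B)) => [->//|p].
by rewrite (_ : i - (i - size B) = size B) ?ltnn ?andbF //; lia.
Qed.

Lemma hh_hi : hh hi0 = false.
Proof.
rewrite /hh /hi0 /m; case: (leqP i (size A)) => c.
  by rewrite subnn.
by rewrite ltnn andbF.
Qed.

Lemma js_ex : exists js, [/\ lo0 <= js, js <= hi0 &
  forall j, lo0 <= j -> j <= hi0 -> hh j = (j < js) /\ t1 j = (js < j)].
Proof.
have ex : exists j, (lo0 <= j) && ~~ hh j.
  by exists hi0; rewrite lohi hh_hi.
case: (ex_minnP ex) => js /andP[ljs hjs] mins.
have jsh : js <= hi0 by apply: mins; rewrite lohi hh_hi.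
have hhF : forall j, js <= j -> j <= hi0 -> hh j = false.
  move=> j a b; apply/negP => hj.
  have : forall d, js + d <= hi0 -> hh (js + d) -> hh js.
    elim=> [|d IH]; first by rewrite addn0.
    move=> b' h'; apply: IH; first lia.
    apply: hh_down; [lia|lia|by rewrite -addnS].
  move/(_ (j - js)); rewrite subnKC // => /(_ b hj).
  by rewrite (negbTE hjs).
have hhE : forall j, lo0 <= j -> j <= hi0 -> hh j = (j < js).
  move=> j a b; case: (ltnP j js) => c; last exact: hhF.
  apply/negPn/negP => nh.
  by have := mins j; rewrite a nh => /(_ isT); rewrite leqNgt c.
exists js; split => // j a b; split; first exact: hhE.
case: (posnP (j - lo0)) => d.
  have -> : j = lo0 by lia.
  by rewrite t1_lo ltnNge ljs.
have -> : j = j.-1.+1 by lia.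
rewrite t1_S; [|lia|lia].
rewrite hhE; [|lia|lia].
by rewrite -leqNgt.
Qed.


Section Loop.
Variable js : nat.
Hypothesis Hjs : forall j, lo0 <= j -> j <= hi0 -> hh j = (j < js) /\ t1 j = (js < j).

Lemma loop_stop fuel j jlow klow steps : lo0 <= j -> j <= hi0 -> j = js ->
  co_rank_loop le x0 A B fuel.+1 j (i - j) jlow klow steps = (j, i - j, steps.+1).
Proof.
move=> a b e; have [h1 h2] := Hjs a b.
move: h1 h2; rewrite /hh /t1 /= e ltnn => -> ->.
by [].
Qed.

Lemma loop_ok e : forall fuel j jlow klow steps,
  e.+2 <= fuel -> lo0 <= jlow -> jlow <= js -> js <= i - klow -> i - klow <= hi0 ->
  jlow <= j -> j <= i - klow -> klow <= i ->
  j - jlow <= 2 ^ e -> i - klow - j <= 2 ^ e ->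
  (co_rank_loop le x0 A B fuel j (i - j) jlow klow steps).1 = (js, i - js) /\
  (co_rank_loop le x0 A B fuel j (i - j) jlow klow steps).2 <= steps + e.+2.
Proof.
elim: e => [|e IH] [|fuel] j jlow klow steps //= Hf l1 l2 l3 l4 l5 l6 l7 a b.
  have l8 : lo0 <= j by lia.
  have l9 : j <= hi0 by lia.
  have [h1 h2] := Hjs l8 l9.
  move: h1 h2; rewrite /hh /t1 => -> ->.
  case: (ltngtP js j) => c /=.
  - case: fuel Hf => [//|fuel] Hf.
    have -> : j - (j - jlow).+1 %/ 2 = js by lia.
    have -> : i - j + (j - jlow).+1 %/ 2 = i - js by lia.
    rewrite loop_stop //=; [split => //; lia|lia|lia].
  - case: fuel Hf => [//|fuel] Hf.
    have -> : j + (i - j - klow).+1 %/ 2 = js by lia.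
    have -> : i - j - (i - j - klow).+1 %/ 2 = i - js by lia.
    rewrite loop_stop //=; [split => //; lia|lia|lia].
  - by rewrite c; split => //; lia.
have l8 : lo0 <= j by lia.
have l9 : j <= hi0 by lia.
have [h1 h2] := Hjs l8 l9.
move: h1 h2; rewrite /hh /t1 => -> ->.
rewrite expnS in a b.
set P := 2 ^ e in a b IH.
case: (ltngtP js j) => c /=.
- have -> : i - j + (j - jlow).+1 %/ 2 = i - (j - (j - jlow).+1 %/ 2) by lia.
  have [] := IH fuel (j - (j - jlow).+1 %/ 2) jlow (i - j) steps.+1; try lia.
  move=> -> H; split => //; lia.
- have -> : i - j - (i - j - klow).+1 %/ 2 = i - (j + (i - j - klow).+1 %/ 2) by lia.
  have [] := IH fuel (j + (i - j - klow).+1 %/ 2) j klow steps.+1; try lia.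
  move=> -> H; split => //; lia.
- by rewrite c; split => //; lia.
Qed.

End Loop.

Lemma bool1 a k nn (c : bool) : k <= nn -> ~~ [&& 0 < a, k < nn & ~~ c] -> [|| a == 0, k == nn | c].
Proof.
move=> kn; rewrite lt0n ltn_neqAle kn andbT.
by case: (a == 0); case: (k == nn); case: c.
Qed.

Lemma bool2 a k nn (c : bool) : k <= nn -> ~~ [&& 0 < a, k < nn & c] -> [|| a == 0, k == nn | ~~ c].
Proof.
move=> kn; rewrite lt0n ltn_neqAle kn andbT.
by case: (a == 0); case: (k == nn); case: c.
Qed.

Lemma co_rank_ok : valid A B (co_rank le x0 A B i).1 (co_rank le x0 A B i).2 /\
  (co_rank le x0 A B i).1 + (co_rank le x0 A B i).2 = i /\
  co_rank_steps le x0 A B i <= trunc_log 2 (minn (size A) (size B)) + 3.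
Proof.
have [js [ljs hjs Hjs]] := js_ex.
have [R1 R2] : (co_rank_run le x0 A B i).1 = (js, i - js) /\
               (co_rank_run le x0 A B i).2 <= trunc_log 2 (minn (size A) (size B)) + 3.
  rewrite /co_rank_run.
  case: (posnP (minn i (size A) - (i - size B))) => W.
    have e : minn i (size A) = js by move: ljs hjs; rewrite /lo0 /hi0 /m /n; lia.
    by rewrite e (loop_stop Hjs) //=; split => //; lia.
  set W0 := minn i (size A) - (i - size B) in W.
  set t := trunc_log 2 W0.
  have t1' : 2 ^ t <= W0 by apply: trunc_logP.
  have t2 : W0 < 2 ^ t.+1 by apply: trunc_log_ltn.
  have t3 : t < 2 ^ t by apply: ltn_expl.
  have t4 : t <= trunc_log 2 (minn (size A) (size B)).
    apply: leq_trunc_log; rewrite /W0; lia.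
  have [] := @loop_ok js Hjs t.+1 (size A + size B).+1 (minn i (size A)) (i - size B) (i - size A) 0;
    move: ljs hjs; rewrite /lo0 /hi0 /m /n /W0 in W t2 t3 t1' * => ljs hjs; try lia.
  move=> -> H; split => //; lia.
rewrite /co_rank /co_rank_steps R1 /=; split; last by split => //; lia.
have [h1 h2] := Hjs js ljs hjs.
move: h1 h2; rewrite ltnn => h1 h2.
move: ljs hjs h1 h2; rewrite /lo0 /hi0 /m /n /hh /t1 => l1 l2 h1 h2.
apply/and4P; split; [lia|lia| |].
  by apply: bool1; [lia|rewrite h2].
by apply: bool2; [lia|rewrite h1].
Qed.

End CoRank.
End Merge.


Lemma split_bound N p r : 0 < p ->
  (r.+1 * N) %/ p - (r * N) %/ p <= (N + p.-1) %/ p.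
Proof.
move=> p0.
have e : (r.+1 * N) %/ p = (r * N) %/ p + ((r * N) %% p + N) %/ p.
  by rewrite mulSn addnC {1}(divn_eq (r * N) p) -addnA divnMDl.
rewrite e addKn addnC; apply: leq_div2r; apply: leq_add => //.
by have := ltn_pmod (r * N) p0; lia.
Qed.

Lemma nth_wb (T : Type) (x0 : T) C i s q : q < size C ->
  nth x0 (write_block x0 C i s) q =
  if (i <= q) && (q < i + size s) then nth x0 s (q - i) else nth x0 C q.
Proof.
move=> qC; rewrite /write_block (nth_map 0); last by rewrite size_iota.
by rewrite nth_iota.
Qed.

Lemma size_wb (T : Type) (x0 : T) C i s : size (write_block x0 C i s) = size C.
Proof. by rewrite /write_block size_map size_iota. Qed.

Theorem proposition2 :
  exists c : nat,
  forall (T : Type) (le : rel T) (x0 : T) (A B : seq T) (p : nat) (C0 : seq T),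
    total le -> transitive le ->
    sorted le A -> sorted le B ->
    0 < p ->
    size C0 = size A + size B ->
    [/\ parallel_merge_result le x0 A B p C0 = stable_merge le A B,
        (forall r, r < p ->
           pe_count le x0 A B p r <= (size A + size B + p.-1) %/ p)
      & par_time le x0 A B p <=
          c * ((size A + size B) %/ p + trunc_log 2 (minn (size A) (size B)) + 1)].
Proof.
exists 8 => T le x0 A B p C0 tot tr sA sB p0 hC.
set N := size A + size B.
set M := merge le A B.
have sM : size M = N by rewrite /M size_merge size_cat.
have ir_le : forall r, r <= p -> ir A B p r <= N.
  move=> r rp; rewrite /ir /split_index -/N.
  apply: leq_trans (leq_div2r p (leq_mul rp (leqnn N))) _.
  by rewrite mulKn.
have ir_mono : forall r, ir A B p r <= ir A B p r.+1.
  by move=> r; rewrite /ir /split_index; apply: leq_div2r; apply: leq_mul.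
have ir0 : ir A B p 0 = 0 by rewrite /ir /split_index mul0n div0n.
have irp : ir A B p p = N by rewrite /ir /split_index mulKn.
have CR : forall r, r <= p ->
   [/\ valid le x0 A B (jr le x0 A B p r) (kr le x0 A B p r),
       jr le x0 A B p r + kr le x0 A B p r = ir A B p r &
       co_rank_steps le x0 A B (ir A B p r) <= trunc_log 2 (minn (size A) (size B)) + 3].
  move=> r rp; have [v [s st]] := co_rank_ok x0 tot tr sA sB (ir_le r rp).
  by split.
have pe_out : forall r, r < p ->
    pe_output le x0 A B p r = take (ir A B p r.+1 - ir A B p r) (drop (ir A B p r) M).
  move=> r rp.
  have [v1 s1 _] := CR r (ltnW rp).
  have [v2 s2 _] := CR r.+1 rp.
  have hs : jr le x0 A B p r + kr le x0 A B p r <= jr le x0 A B p r.+1 + kr le x0 A B p r.+1.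
    by rewrite s1 s2.
  by rewrite /pe_output /stable_merge (merge_piece tot tr sA sB v1 v2 hs) s1 s2.
have pe_cnt : forall r, r < p -> pe_count le x0 A B p r = ir A B p r.+1 - ir A B p r.
  move=> r rp.
  have [v1 s1 _] := CR r (ltnW rp).
  have [v2 s2 _] := CR r.+1 rp.
  have hs : jr le x0 A B p r + kr le x0 A B p r <= jr le x0 A B p r.+1 + kr le x0 A B p r.+1.
    by rewrite s1 s2.
  have [h1 h2] := valid_mono tot tr sA sB v1 v2 hs.
  rewrite /pe_count -s1 -s2; lia.
have cnt_bound : forall r, r < p -> pe_count le x0 A B p r <= (N + p.-1) %/ p.
  by move=> r rp; rewrite pe_cnt //; apply: split_bound.
split => //.
-
  have inv : forall q, q <= p ->
    let C := foldl (fun C r => write_block x0 C (ir A B p r) (pe_output le x0 A B p r))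
                   C0 (iota 0 q) in
    size C = N /\ forall idx, idx < N ->
      nth x0 C idx = if idx < ir A B p q then nth x0 M idx else nth x0 C0 idx.
    elim=> [|q IH] qp.
      by split => //= idx _; rewrite ir0.
    have [IH1 IH2] := IH (ltnW qp).
    rewrite -addn1 iotaD foldl_cat /= add0n.
    set C := foldl _ C0 (iota 0 q) in IH1 IH2 *.
    split; first by rewrite size_wb.
    move=> idx idN; rewrite nth_wb ?IH1 // pe_out // IH2 //.
    have hq := ir_mono q; have hq' := ir_le q.+1 qp.
    rewrite size_take size_drop sM.
    have -> : (if ir A B p q.+1 - ir A B p q < N - ir A B p q
               then ir A B p q.+1 - ir A B p q else N - ir A B p q)
              = ir A B p q.+1 - ir A B p q by case: ifP; lia.
    rewrite addn1.
    case: (ltnP idx (ir A B p q)) => c1 /=.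
      by rewrite ifT //; lia.
    case: (ltnP idx (ir A B p q.+1)) => c2.
      rewrite ifT; last lia.
      rewrite nth_take; last lia.
      by rewrite nth_drop subnKC.
    by rewrite ifF //; lia.
  have [I1 I2] := inv p (leqnn p).
  rewrite /parallel_merge_result /stable_merge -/M.
  apply: (eq_from_nth (x0 := x0)); first by rewrite I1 sM.
  by move=> idx; rewrite I1 => idN; rewrite I2 // irp idN.
-
  rewrite /par_time; apply/bigmax_leqP => r _.
  have rp := ltn_ord r.
  have [_ _ st1] := CR r (ltnW rp).
  have [_ _ st2] := CR r.+1 rp.
  have cb := cnt_bound r rp.
  have hd := leq_divDl p N p.-1.
  have h0 : p.-1 %/ p = 0 by apply: divn_small; lia.
  rewrite h0 in hd.
  rewrite /pe_time.
  set D := N %/ p in hd *.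
  set L := trunc_log 2 _ in st1 st2 *.
  lia.
Qed.
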